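(* Let $c_0>0$, let $\mu:[c_0,\infty)\to\mathbb{R}$ and $Q:[1,\infty)\to\mathbb{R}_{\ge 0}$ be twice differentiable, increasing and concave. For $B\ge c_0$ and $\omega\in[c_0,B]$ let $Z_B(\omega)=\mu(\omega)+Q(B/\omega)$, let $\Omega^*(B)=\arg\max_{\omega\in[c_0,B]} Z_B(\omega)$, and let $\underline{\omega}(B)=\min\Omega^*(B)$, $\overline{\omega}(B)=\max\Omega^*(B)$. (i) If $N\mapsto N\,Q'(N)$ is non-increasing on $[1,\infty)$, then both $\underline{\omega}(B)$ and $\overline{\omega}(B)$ are non-decreasing functions of $B\in[c_0,\infty)$. (ii) If in addition $N\mapsto N^2 Q'(N)$ is strictly decreasing on $[1,\infty)$, then for every $B\ge c_0$ the set $\Omega^*(B)$ is a singleton $\{\omega^\star(B)\}$, and $B\mapsto\omega^\star(B)$ is non-decreasing.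
   Context: Interpretation: $B$ is a total budget, $\omega$ a per-run budget, $\mu(\omega)$ the expected fitness of a single run with budget $\omega$, and $Q(N)$ the expected gain from taking the maximum over $N=B/\omega$ independent runs (continuous relaxation). $\Omega^*(B)$ is nonempty and compact since $Z_B$ is continuous on the compact interval $[c_0,B]$, so its minimum and maximum exist. *)

(* Defs.v *)
From Stdlib Require Import Reals Lra.
From Coquelicot Require Import Coquelicot.
Open Scope R_scope.

Definition is_derive_within (D : R -> Prop) (f : R -> R) (x l : R) : Prop :=
  filterlim (fun y => (f y - f x) / (y - x))
            (within (fun y => D y /\ y <> x) (locally x)) (locally l).

Definition twice_diff_on (D : R -> Prop) (f df d2f : R -> R) : Prop :=
  (forall x, D x -> is_derive_within D f x (df x)) /\
  (forall x, D x -> is_derive_within D df x (d2f x)).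

Definition increasing_on (D : R -> Prop) (f : R -> R) : Prop :=
  forall x y, D x -> D y -> x <= y -> f x <= f y.

Definition strictly_decreasing_on (D : R -> Prop) (f : R -> R) : Prop :=
  forall x y, D x -> D y -> x < y -> f y < f x.

Definition nonincreasing_on (D : R -> Prop) (f : R -> R) : Prop :=
  forall x y, D x -> D y -> x <= y -> f y <= f x.

Definition concave_on (D : R -> Prop) (f : R -> R) : Prop :=
  forall x y t, D x -> D y -> 0 <= t <= 1 ->
    t * f x + (1 - t) * f y <= f (t * x + (1 - t) * y).

Definition Z (mu Q : R -> R) (B w : R) : R := mu w + Q (B / w).

Definition argmax_set (c0 : R) (mu Q : R -> R) (B w : R) : Prop :=
  c0 <= w <= B /\ forall w', c0 <= w' <= B -> Z mu Q B w' <= Z mu Q B w.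

Definition is_min_argmax (c0 : R) (mu Q : R -> R) (B w : R) : Prop :=
  argmax_set c0 mu Q B w /\ forall w', argmax_set c0 mu Q B w' -> w <= w'.

Definition is_max_argmax (c0 : R) (mu Q : R -> R) (B w : R) : Prop :=
  argmax_set c0 mu Q B w /\ forall w', argmax_set c0 mu Q B w' -> w' <= w.

(* Main.v *)
Require Import Defs.
From Stdlib Require Import Reals Lra.
From Coquelicot Require Import Coquelicot.
Open Scope R_scope.

Lemma ext_deriv D f x l : is_derive_within D f x l ->
  forall eps, 0 < eps -> exists d, 0 < d /\ forall y, D y -> y <> x -> Rabs (y - x) < d ->
    Rabs ((f y - f x) / (y - x) - l) < eps.
Proof.
  intros H eps He.
  destruct (H (ball l (mkposreal eps He)) (locally_ball l (mkposreal eps He))) as [d Hd].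
  exists d. split. apply cond_pos. intros y Dy Ny Hy. apply (Hd y Hy). split; auto.
Qed.

Definition cw (D : R -> Prop) (f : R -> R) (x : R) : Prop :=
  forall eps, 0 < eps -> exists d, 0 < d /\ forall y, D y -> Rabs (y - x) < d -> Rabs (f y - f x) < eps.

Lemma deriv_cw D f x l : is_derive_within D f x l -> cw D f x.
Proof.
  intros H eps He.
  destruct (ext_deriv D f x l H 1 Rlt_0_1) as [d [Hd Hy]].
  set (K := Rabs l + 1).
  assert (HK : 0 < K) by (unfold K; pose proof (Rabs_pos l); lra).
  exists (Rmin d (eps / K)). split. apply Rmin_pos; auto. apply Rdiv_lt_0_compat; auto.
  intros y Dy Hyx.
  destruct (Req_dec y x) as [E|E]. subst. replace (f x - f x) with 0 by ring. rewrite Rabs_R0; auto.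
  assert (H1 := Hy y Dy E (Rlt_le_trans _ _ _ Hyx (Rmin_l _ _))).
  assert (Hyx2 := Rlt_le_trans _ _ _ Hyx (Rmin_r _ _)).
  assert (Hq : Rabs ((f y - f x) / (y - x)) <= K).
  { unfold K. replace ((f y - f x) / (y - x)) with (((f y - f x) / (y - x) - l) + l) by ring.
    eapply Rle_trans. apply Rabs_triang. lra. }
  replace (f y - f x) with ((f y - f x) / (y - x) * (y - x)) by (field; lra).
  rewrite Rabs_mult.
  assert (0 < Rabs (y - x)) by (apply Rabs_pos_lt; lra).
  apply Rle_lt_trans with (K * Rabs (y - x)).
  apply Rmult_le_compat_r; lra.
  replace eps with (K * (eps / K)) by (field; lra).
  apply Rmult_lt_compat_l; auto.
Qed.

Lemma deriv_interior (D : R -> Prop) f x l r : 0 < r -> (forall y, Rabs (y - x) < r -> D y) ->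
  is_derive_within D f x l -> is_derive f x l.
Proof.
  intros Hr HD H. apply is_derive_Reals. intros eps He.
  destruct (ext_deriv D f x l H eps He) as [d [Hd Hy]].
  assert (Hm : 0 < Rmin d r) by (apply Rmin_pos; auto).
  exists (mkposreal _ Hm). intros h Hh Hh2. simpl in Hh2.
  assert (Hh3 : Rabs (x + h - x) < Rmin d r) by (replace (x+h-x) with h by ring; auto).
  assert (E : x + h <> x) by lra.
  pose proof (Hy (x+h) (HD _ (Rlt_le_trans _ _ _ Hh3 (Rmin_r _ _))) E (Rlt_le_trans _ _ _ Hh3 (Rmin_l _ _))).
  replace (x + h - x) with h in H0 by ring. exact H0.
Qed.

Lemma cw_sub (D E : R -> Prop) f x : (forall y, E y -> D y) -> cw D f x -> cw E f x.
Proof. intros HS H eps He. destruct (H eps He) as [d [Hd Hy]]. exists d; split; auto. Qed.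

Lemma cw_comp (D E : R -> Prop) f g x : (forall y, E y -> D (g y)) -> cw E g x -> cw D f (g x) ->
  cw E (fun y => f (g y)) x.
Proof.
  intros HS Hg Hf eps He. destruct (Hf eps He) as [d [Hd Hy]].
  destruct (Hg d Hd) as [d2 [Hd2 Hy2]]. exists d2; split; [exact Hd2|].
  intros y Ey Hyx. apply Hy; auto.
Qed.

Lemma cw_plus D f g x : cw D f x -> cw D g x -> cw D (fun y => f y + g y) x.
Proof.
  intros Hf Hg eps He. destruct (Hf (eps/2)) as [d1 [Hd1 H1]]; [lra|].
  destruct (Hg (eps/2)) as [d2 [Hd2 H2]]; [lra|].
  exists (Rmin d1 d2); split. apply Rmin_pos; auto.
  intros y Dy Hy.
  pose proof (H1 y Dy (Rlt_le_trans _ _ _ Hy (Rmin_l _ _))).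
  pose proof (H2 y Dy (Rlt_le_trans _ _ _ Hy (Rmin_r _ _))).
  replace (f y + g y - (f x + g x)) with ((f y - f x) + (g y - g x)) by ring.
  eapply Rle_lt_trans. apply Rabs_triang. lra.
Qed.

Lemma cw_opp D f x : cw D f x -> cw D (fun y => - f y) x.
Proof.
  intros Hf eps He. destruct (Hf eps He) as [d [Hd H]]. exists d; split; auto.
  intros y Dy Hy. replace (- f y - - f x) with (- (f y - f x)) by ring. rewrite Rabs_Ropp. auto.
Qed.

Lemma cw_lin D a b x : cw D (fun y => a * y + b) x.
Proof.
  intros eps He. exists (eps / (Rabs a + 1)). split.
  apply Rdiv_lt_0_compat; auto. pose proof (Rabs_pos a); lra.
  intros y Dy Hy. replace (a * y + b - (a * x + b)) with (a * (y - x)) by ring.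
  rewrite Rabs_mult. pose proof (Rabs_pos a). pose proof (Rabs_pos (y - x)).
  apply Rle_lt_trans with ((Rabs a + 1) * Rabs (y - x)). nra.
  replace eps with ((Rabs a + 1) * (eps / (Rabs a + 1))) by (field; lra).
  apply Rmult_lt_compat_l; lra.
Qed.

Lemma cw_inv (D : R -> Prop) c B x : 0 < c -> (forall y, D y -> c <= y) -> D x ->
  cw D (fun y => B / y) x.
Proof.
  intros Hc HD Dx eps He.
  set (K := (Rabs B + 1) / (c * c)).
  assert (HK : 0 < K) by (unfold K; apply Rdiv_lt_0_compat; [pose proof (Rabs_pos B); lra | nra]).
  exists (eps / K). split. apply Rdiv_lt_0_compat; auto.
  intros y Dy Hy. pose proof (HD y Dy). pose proof (HD x Dx).
  replace (B / y - B / x) with (B * (x - y) / (x * y)) by (field; lra).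
  unfold Rdiv. rewrite Rabs_mult, Rabs_mult, Rabs_inv by nra.
  rewrite (Rabs_right (x*y)) by nra.
  rewrite <- Rabs_Ropp, Ropp_minus_distr in Hy.
  pose proof (Rabs_pos B). pose proof (Rabs_pos (x - y)).
  assert (Hxy : c * c <= x * y) by nra.
  assert (Hi : / (x * y) <= / (c * c)) by (apply Rinv_le_contravar; nra).
  apply Rle_lt_trans with (K * Rabs (x - y)).
  { unfold K, Rdiv. assert (0 <= / (x*y)) by (left; apply Rinv_0_lt_compat; nra).
    assert (0 <= /(c*c)) by (left; apply Rinv_0_lt_compat; nra).
    replace ((Rabs B + 1) * / (c * c) * Rabs (x - y)) with ((Rabs B + 1) * Rabs (x - y) * / (c * c)) by ring.
    apply Rmult_le_compat; try nra. }
  replace eps with (K * (eps / K)) by (field; lra).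
  apply Rmult_lt_compat_l; lra.
Qed.
Definition clamp (a b x : R) : R := Rmax a (Rmin b x).

Lemma clamp_in a b x : a <= b -> a <= clamp a b x <= b.
Proof. intros. unfold clamp, Rmax, Rmin. repeat destruct Rle_dec; lra. Qed.

Lemma clamp_id a b x : a <= x <= b -> clamp a b x = x.
Proof. intros. unfold clamp, Rmax, Rmin. repeat destruct Rle_dec; lra. Qed.

Lemma clamp_lip a b x y : a <= b -> Rabs (clamp a b x - clamp a b y) <= Rabs (x - y).
Proof.
  intros. unfold clamp, Rmax, Rmin. unfold Rabs.
  repeat destruct Rle_dec; repeat destruct Rcase_abs; lra.
Qed.

Definition cont_on (a b : R) (f : R -> R) := forall x, a <= x <= b -> cw (fun y => a <= y <= b) f x.

Lemma cont_on_sub a b a' b' f : a <= a' -> b' <= b -> cont_on a b f -> cont_on a' b' f.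
Proof.
  intros H1 H2 H x Hx. apply cw_sub with (fun y => a <= y <= b). intros; lra. apply H; lra.
Qed.

Lemma clamp_cont a b f : a <= b -> cont_on a b f -> forall c, continuity_pt (fun x => f (clamp a b x)) c.
Proof.
  intros Hab H c eps He.
  destruct (H (clamp a b c) (clamp_in a b c Hab) eps He) as [d [Hd Hy]].
  exists d. split; auto. intros x [_ Hx]. simpl in *. unfold R_dist in *.
  apply Hy. apply clamp_in; auto.
  eapply Rle_lt_trans. apply clamp_lip; auto. auto.
Qed.

Lemma mvt_clamp a b f df a' b' : a <= a' -> a' < b' -> b' <= b -> cont_on a b f ->
  (forall x, a' < x < b' -> is_derive f x (df x)) ->
  exists c, a' <= c <= b' /\ f b' - f a' = df c * (b' - a').
Proof.
  intros H1 H2 H3 Hc Hd.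
  destruct (MVT_gen (fun x => f (clamp a b x)) a' b' df) as [c [Hc1 Hc2]].
  - rewrite Rmin_left, Rmax_right by lra. intros x Hx.
    apply is_derive_ext_loc with f; [|apply Hd; auto].
    assert (Hm : 0 < Rmin (x - a) (b - x)) by (apply Rmin_pos; lra).
    exists (mkposreal _ Hm). intros y Hy. change (Rabs (y - x) < Rmin (x - a) (b - x)) in Hy.
    pose proof (Rmin_l (x-a) (b-x)). pose proof (Rmin_r (x-a) (b-x)).
    apply Rabs_def2 in Hy. rewrite clamp_id; auto. lra.
  - intros. apply clamp_cont; auto. lra.
  - rewrite Rmin_left, Rmax_right in Hc1 by lra. exists c. split; auto.
    rewrite !clamp_id in Hc2 by lra. auto.
Qed.

Lemma mono a b f df : a <= b -> cont_on a b f ->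
  (forall x, a < x < b -> is_derive f x (df x) /\ 0 <= df x) -> f a <= f b.
Proof.
  intros Hab Hc Hd. destruct (Req_dec a b) as [E|E]. subst; lra.
  destruct (mvt_clamp a b f (fun x => Rmax 0 (df x)) a b) as [c [_ Hc2]]; try lra; auto.
  intros x Hx. destruct (Hd x Hx). rewrite Rmax_right; auto.
  pose proof (Rmax_l 0 (df c)). nra.
Qed.

Lemma smono a b f df : a < b -> cont_on a b f ->
  (forall x, a < x < b -> is_derive f x (df x) /\ 0 < df x) -> f a < f b.
Proof.
  intros Hab Hc Hd.
  set (a' := a + (b - a) / 3). set (b' := a + 2 * (b - a) / 3).
  assert (f a <= f a').
  { apply mono with df. unfold a'; lra. apply cont_on_sub with a b; auto; unfold a'; lra.
    intros x Hx. destruct (Hd x); [unfold a' in Hx; lra|]. split; auto; lra. }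
  assert (f b' <= f b).
  { apply mono with df. unfold b'; lra. apply cont_on_sub with a b; auto; unfold b'; lra.
    intros x Hx. destruct (Hd x); [unfold b' in Hx; lra|]. split; auto; lra. }
  destruct (mvt_clamp a b f df a' b') as [c [Hc1 Hc2]]; try (unfold a', b'; lra); auto.
  intros x Hx. apply Hd. unfold a', b' in *; lra.
  destruct (Hd c) as [_ Hp]. unfold a', b' in *; lra.
  assert (0 < df c * (b' - a')) by (apply Rmult_lt_0_compat; unfold a', b'; lra). lra.
Qed.
Lemma cw_ext D f g x : (forall y, f y = g y) -> cw D f x -> cw D g x.
Proof. intros E H eps He. destruct (H eps He) as [d [Hd Hy]]. exists d; split; auto.
  intros. rewrite <- !E. auto. Qed.

Lemma le_div w B : 0 < w -> w <= B -> 1 <= B / w.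
Proof. intros. apply (Rmult_le_reg_r w); auto. unfold Rdiv. rewrite Rmult_assoc, Rinv_l, Rmult_1_r; lra. Qed.

Lemma lt_div w B : 0 < w -> w < B -> 1 < B / w.
Proof. intros. apply (Rmult_lt_reg_r w); auto. unfold Rdiv. rewrite Rmult_assoc, Rinv_l, Rmult_1_r; lra. Qed.

Section S.
Variables (Q dQ : R -> R).
Hypothesis HQd : forall x, 1 <= x -> is_derive_within (fun N => 1 <= N) Q x (dQ x).

Lemma Q_der x : 1 < x -> is_derive Q x (dQ x).
Proof.
  intros Hx. apply deriv_interior with (fun N => 1 <= N) (x - 1). lra.
  intros y Hy. apply Rabs_def2 in Hy. lra. apply HQd; lra.
Qed.

Lemma Q_cw x : 1 <= x -> cw (fun N => 1 <= N) Q x.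
Proof. intros. apply deriv_cw with (dQ x). auto. Qed.

Lemma hr_mono r x v : nonincreasing_on (fun N => 1 <= N) (fun N => N * dQ N) ->
  1 <= r -> 1 <= x -> x <= v -> Q (r * v) - Q v <= Q (r * x) - Q x.
Proof.
  intros HN Hr Hx Hxv.
  cut (Q x - Q (r * x) <= Q v - Q (r * v)). lra.
  apply (mono x v (fun s => Q s - Q (r * s)) (fun s => dQ s - r * dQ (r * s))); auto.
  - intros s Hs. change (cw (fun y => x <= y <= v) (fun y => Q y + - Q (r * y)) s).
    apply cw_plus. apply cw_sub with (fun N => 1 <= N). intros; lra. apply Q_cw; lra.
    apply cw_opp. apply cw_comp with (D := fun N => 1 <= N). intros; nra.
    apply cw_ext with (fun y => r * y + 0). intros; ring. apply cw_lin.
    apply Q_cw. nra.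
  - intros s Hs. split.
    + assert (H1 : is_derive (fun y => Q (r * y)) s (r * dQ (r * s))).
      { apply (is_derive_comp Q (fun y => r * y) s (dQ (r * s)) r).
        apply Q_der; nra. auto_derive; auto; ring. }
      pose proof (is_derive_minus Q (fun y => Q (r * y)) s _ _ (Q_der s ltac:(lra)) H1) as H2.
      exact H2.
    + pose proof (HN s (r * s) ltac:(simpl; lra) ltac:(simpl; nra) ltac:(nra)). simpl in H. nra.
Qed.

Lemma key_ineq c0 B1 B2 w1 w2 : nonincreasing_on (fun N => 1 <= N) (fun N => N * dQ N) ->
  0 < c0 -> B1 <= B2 -> w2 < w1 -> c0 <= w2 -> w1 <= B1 ->
  Q (B2 / w2) - Q (B2 / w1) <= Q (B1 / w2) - Q (B1 / w1).
Proof.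
  intros HN Hc HB Hw H2 H1.
  replace (B2 / w2) with ((w1 / w2) * (B2 / w1)) by (field; lra).
  replace (B1 / w2) with ((w1 / w2) * (B1 / w1)) by (field; lra).
  apply hr_mono; auto.
  apply le_div; lra. apply le_div; lra.
  unfold Rdiv. apply Rmult_le_compat_r; auto. left; apply Rinv_0_lt_compat; lra.
Qed.

End S.
Lemma phi_der (Q dQ : R -> R) B a s :
  (forall x, 1 <= x -> is_derive_within (fun N => 1 <= N) Q x (dQ x)) ->
  0 < a + s -> 1 < B / (a + s) ->
  is_derive (fun y => Q (B / (a + y))) s ((- B / (a + s) ^ 2) * dQ (B / (a + s))).
Proof.
  intros HQd Hw HN.
  apply (is_derive_comp Q (fun y => B / (a + y)) s (dQ (B / (a + s))) (- B / (a + s) ^ 2)).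
  apply Q_der; auto. auto_derive. lra. field. lra.
Qed.

Lemma phi_cw (Q dQ : R -> R) c0 B a d s :
  (forall x, 1 <= x -> is_derive_within (fun N => 1 <= N) Q x (dQ x)) ->
  0 < c0 -> c0 <= a -> a + d <= B -> 0 <= s <= d ->
  cw (fun y => 0 <= y <= d) (fun y => Q (B / (a + y))) s.
Proof.
  intros HQd Hc Ha HB Hs.
  apply cw_comp with (D := fun N => 1 <= N). intros; apply le_div; lra.
  apply cw_comp with (D := fun y => c0 <= y) (f := fun y => B / y) (g := fun y => a + y).
  intros; lra. apply cw_ext with (fun y => 1 * y + a). intros; ring. apply cw_lin.
  apply cw_inv with c0; auto. lra.
  apply Q_cw with dQ; auto. apply le_div; lra.
Qed.

Lemma Z_cont c0 (mu dmu Q dQ : R -> R) B : 0 < c0 -> c0 <= B ->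
  (forall x, c0 <= x -> is_derive_within (fun x => c0 <= x) mu x (dmu x)) ->
  (forall x, 1 <= x -> is_derive_within (fun N => 1 <= N) Q x (dQ x)) ->
  cont_on c0 B (fun w => Defs.Z mu Q B w).
Proof.
  intros Hc HB Hmu HQd w Hw. unfold Defs.Z.
  apply cw_plus. apply cw_sub with (fun x => c0 <= x). intros; lra.
  apply deriv_cw with (dmu w). apply Hmu; lra.
  apply cw_comp with (D := fun N => 1 <= N). intros; apply le_div; lra.
  apply cw_inv with c0; auto. intros; lra.
  apply Q_cw with dQ; auto. apply le_div; lra.
Qed.

Lemma uniq c0 (mu Q dQ : R -> R) B a b : 0 < c0 ->
  concave_on (fun x => c0 <= x) mu ->
  (forall x, 1 <= x -> is_derive_within (fun N => 1 <= N) Q x (dQ x)) ->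
  strictly_decreasing_on (fun N => 1 <= N) (fun N => N ^ 2 * dQ N) ->
  argmax_set c0 mu Q B a -> argmax_set c0 mu Q B b -> a < b -> False.
Proof.
  intros Hc Hcon HQd HS [Ha Ma] [Hb Mb] Hab.
  set (d := (b - a) / 2). set (m := a + d).
  assert (Hd : 0 < d) by (unfold d; lra).
  assert (Hlt : (fun y => Q (B / (a + y)) - Q (B / (m + y))) 0 <
                (fun y => Q (B / (a + y)) - Q (B / (m + y))) d).
  { apply (smono 0 d (fun y => Q (B / (a + y)) - Q (B / (m + y))) (fun s => (- B / (a + s) ^ 2) * dQ (B / (a + s)) -
                               (- B / (m + s) ^ 2) * dQ (B / (m + s)))); auto.
    - intros s Hs. change (cw (fun y => 0 <= y <= d)
          (fun y => Q (B / (a + y)) + - Q (B / (m + y))) s).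
      apply cw_plus. apply phi_cw with dQ c0; auto; unfold m, d in *; lra.
      apply cw_opp. apply phi_cw with dQ c0; auto; unfold m, d in *; lra.
    - intros s Hs.
      assert (N1 : 1 < B / (a + s)) by (apply lt_div; unfold m, d in *; lra).
      assert (N2 : 1 < B / (m + s)) by (apply lt_div; unfold m, d in *; lra).
      split.
      + apply (is_derive_minus (fun y => Q (B / (a + y))) (fun y => Q (B / (m + y)))).
        apply phi_der; auto; lra. apply phi_der; auto; unfold m, d in *; lra.
      + assert (Hw : a + s < m + s) by (unfold m; lra).
        assert (HNN : B / (m + s) < B / (a + s)).
        { unfold Rdiv. apply Rmult_lt_compat_l. lra. apply Rinv_lt_contravar; auto. apply Rmult_lt_0_compat; unfold m, d in *; lra. }
        pose proof (HS (B / (m + s)) (B / (a + s)) ltac:(simpl; lra) ltac:(simpl; lra) HNN) as H. simpl in H.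
        replace ((- B / (a + s) ^ 2) * dQ (B / (a + s)) - (- B / (m + s) ^ 2) * dQ (B / (m + s)))
          with (((B / (m + s)) ^ 2 * dQ (B / (m + s)) - (B / (a + s)) ^ 2 * dQ (B / (a + s))) / B)
          by (field; split; lra).
        apply Rdiv_lt_0_compat; lra. }
  simpl in Hlt. rewrite !Rplus_0_r in Hlt. change (a + d) with m in Hlt.
  replace (m + d) with b in Hlt by (unfold m, d; field).
  pose proof (Hcon a b (1/2) ltac:(lra) ltac:(lra) ltac:(lra)) as Hc2.
  replace (1 / 2 * a + (1 - 1 / 2) * b) with m in Hc2 by (unfold m, d; field).
  assert (Hm : c0 <= m <= B) by (unfold m, d; lra).
  pose proof (Ma m Hm). pose proof (Ma b Hb). pose proof (Mb a Ha).
  unfold Defs.Z in *. lra.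
Qed.
Theorem theorem1 (c0 : R) (mu dmu d2mu Q dQ d2Q : R -> R) :
  0 < c0 ->
  twice_diff_on (fun x => c0 <= x) mu dmu d2mu ->
  increasing_on (fun x => c0 <= x) mu ->
  concave_on (fun x => c0 <= x) mu ->
  twice_diff_on (fun N => 1 <= N) Q dQ d2Q ->
  (forall N, 1 <= N -> 0 <= Q N) ->
  increasing_on (fun N => 1 <= N) Q ->
  concave_on (fun N => 1 <= N) Q ->
  (* (i) *)
  (nonincreasing_on (fun N => 1 <= N) (fun N => N * dQ N) ->
   (forall B1 B2 w1 w2, c0 <= B1 -> B1 <= B2 ->
      is_min_argmax c0 mu Q B1 w1 -> is_min_argmax c0 mu Q B2 w2 -> w1 <= w2) /\
   (forall B1 B2 w1 w2, c0 <= B1 -> B1 <= B2 ->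
      is_max_argmax c0 mu Q B1 w1 -> is_max_argmax c0 mu Q B2 w2 -> w1 <= w2))
  /\
  (* (ii) *)
  (nonincreasing_on (fun N => 1 <= N) (fun N => N * dQ N) ->
   strictly_decreasing_on (fun N => 1 <= N) (fun N => N ^ 2 * dQ N) ->
   (forall B, c0 <= B -> exists w, forall w', argmax_set c0 mu Q B w' <-> w' = w) /\
   (forall B1 B2 w1 w2, c0 <= B1 -> B1 <= B2 ->
      argmax_set c0 mu Q B1 w1 -> argmax_set c0 mu Q B2 w2 -> w1 <= w2)).
Proof.
  intros Hc [Hmu _] Hinc Hcon [HQd _] HQ0 HQinc HQcon.
  assert (Pmin : nonincreasing_on (fun N => 1 <= N) (fun N => N * dQ N) ->
     forall B1 B2 w1 w2, c0 <= B1 -> B1 <= B2 ->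
      is_min_argmax c0 mu Q B1 w1 -> argmax_set c0 mu Q B2 w2 -> w1 <= w2).
  { intros HN B1 B2 w1 w2 HB1 HB [[H1 M1] Min1] [H2 M2].
    destruct (Rle_lt_dec w1 w2) as [|Hlt]; auto. exfalso.
    assert (Hs : Defs.Z mu Q B1 w2 < Defs.Z mu Q B1 w1).
    { destruct (Rlt_le_dec (Defs.Z mu Q B1 w2) (Defs.Z mu Q B1 w1)) as [|Hge]; auto.
      exfalso. assert (w1 <= w2); [|lra]. apply Min1. split. lra.
      intros w' Hw'. eapply Rle_trans; [apply M1; auto| exact Hge]. }
    pose proof (M2 w1 ltac:(lra)).
    pose proof (key_ineq Q dQ HQd c0 B1 B2 w1 w2 HN Hc HB Hlt ltac:(lra) ltac:(lra)).
    unfold Defs.Z in *. lra. }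
  split.
  - intros HN. split.
    + intros B1 B2 w1 w2 HB1 HB H1 [H2 _]. eapply Pmin; eauto.
    + intros B1 B2 w1 w2 HB1 HB [[H1 M1] _] [[H2 M2] Max2].
      destruct (Rle_lt_dec w1 w2) as [|Hlt]; auto. exfalso.
      assert (Hs : Defs.Z mu Q B2 w1 < Defs.Z mu Q B2 w2).
      { destruct (Rlt_le_dec (Defs.Z mu Q B2 w1) (Defs.Z mu Q B2 w2)) as [|Hge]; auto.
        exfalso. assert (w1 <= w2); [|lra]. apply Max2. split. lra.
        intros w' Hw'. eapply Rle_trans; [apply M2; auto| exact Hge]. }
      pose proof (M1 w2 ltac:(lra)).
      pose proof (key_ineq Q dQ HQd c0 B1 B2 w1 w2 HN Hc HB Hlt ltac:(lra) ltac:(lra)).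
      unfold Defs.Z in *. lra.
  - intros HN HS.
    assert (Huniq : forall B a b, argmax_set c0 mu Q B a -> argmax_set c0 mu Q B b -> a = b).
    { intros B a b Ha Hb. destruct (Rtotal_order a b) as [H|[H|H]].
      exfalso; exact (uniq c0 mu Q dQ B a b Hc Hcon HQd HS Ha Hb H). exact H.
      exfalso; exact (uniq c0 mu Q dQ B b a Hc Hcon HQd HS Hb Ha H). }
    split.
    + intros B HB.
      destruct (continuity_ab_maj (fun x => Defs.Z mu Q B (clamp c0 B x)) c0 B HB) as [w [Hw1 Hw2]].
      { intros c _. apply (clamp_cont c0 B (fun w => Defs.Z mu Q B w) HB). apply Z_cont with dmu dQ; auto. }
      rewrite clamp_id in Hw1 by auto.
      assert (Aw : argmax_set c0 mu Q B w).
      { split; auto. intros w' Hw'. pose proof (Hw1 w' Hw'). rewrite clamp_id in H by auto. auto. }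
      exists w. intros w'. split. intros; eapply Huniq; eauto. intros ->; auto.
    + intros B1 B2 w1 w2 HB1 HB H1 H2. eapply Pmin; eauto.
      split; auto. intros w' Hw'. rewrite (Huniq _ _ _ H1 Hw'). lra.
Qed.
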